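(* Let $g$ and $k$ be positive integers, and let $A \in \mathcal A_k$. Then the number of numerical semigroups with genus $g$ and type $(A; k)$ is at most $F_{g - |(A + A)\cap[0, k]| + |A| - k - 1}$, with equality if $3k \leq g + |A| + |(A + A)\cap[0, k]| - 2$; in particular equality holds if $3k \leq g$.
   Context: A numerical semigroup is a subset $\Lambda\subseteq\mathbb{N}_0$ closed under addition, containing $0$, with finite complement in $\mathbb{N}_0$. Its genus is $|\mathbb{N}_0\setminus\Lambda|$, its multiplicity $m$ is its smallest nonzero element and its Frobenius number $f$ is the largest element of $\mathbb{N}_0\setminus\Lambda$. For integers $a\le b$, $[a,b]=\{a,\dots,b\}$. For $A\subseteq\mathbb{Z}$ and $b\in\mathbb{Z}$, $A+A=\{a_1+a_2:a_1,a_2\in A\}$ and $b+A=\{a+b:a\in A\}$. For a positive integer $k$, $\mathcal A_k = \{A \subseteq [0, k-1] : 0 \in A \text{ and } k \notin A + A\}$. A numerical semigroup $\Lambda$ with multiplicity $m$ and Frobenius number $f$ satisfying $2m<f<3m$ has type $(A;k)$, where $k<m$ is a positive integer and $A\in\mathcal A_k$, if $f=2m+k$ and $\Lambda\cap[m,m+k]=A+m$. $F_n$ are the Fibonacci numbers, $F_1=F_2=1$, $F_{n+2}=F_{n+1}+F_n$, with the convention $F_n=0$ for all $n\le 0$. *)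

(* Defs.v *)
From mathcomp Require Import all_boot all_algebra.
Set Implicit Arguments. Unset Strict Implicit. Unset Printing Implicit Defensive.

(* A numerical semigroup Lambda is represented by its set of gaps
   N_0 \ Lambda, encoded canonically as a strictly increasing list. *)
Definition is_gapset (G : seq nat) : Prop :=
  sorted ltn G /\ 0 \notin G /\
  (forall a b, a \notin G -> b \notin G -> a + b \notin G).

Definition semigroup_of (G : seq nat) : pred nat := fun x => x \notin G.

Definition genus (G : seq nat) : nat := size G.

Definition is_multiplicity (G : seq nat) (m : nat) : Prop :=
  0 < m /\ semigroup_of G m /\ (forall x, 0 < x < m -> ~~ semigroup_of G x).

Definition is_frobenius (G : seq nat) (f : nat) : Prop :=
  ~~ semigroup_of G f /\ (forall x, ~~ semigroup_of G x -> x <= f).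

Definition in_sumset (A : seq nat) (x : nat) : bool :=
  has (fun a => has (fun b => a + b == x) A) A.

Definition in_calA (k : nat) (A : seq nat) : Prop :=
  sorted ltn A /\ (forall a, a \in A -> a <= k - 1) /\ 0 \in A /\ ~~ in_sumset A k.

Definition sumset_card_upto (A : seq nat) (k : nat) : nat :=
  count (in_sumset A) (iota 0 k.+1).

Definition has_type (G : seq nat) (A : seq nat) (k : nat) : Prop :=
  exists m f, is_multiplicity G m /\ is_frobenius G f /\
    2 * m < f < 3 * m /\ 0 < k /\ k < m /\ in_calA k A /\ f = 2 * m + k /\
    (forall x, m <= x <= m + k -> semigroup_of G x = ((x - m) \in A)).

Fixpoint fib (n : nat) : nat :=
  match n with
  | 0 => 0
  | 1 => 1
  | (m.+1 as p).+1 => fib p + fib m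
  end.

Definition fibz (n : int) : nat :=
  match n with Posz m => fib m | Negz _ => 0 end.

Definition card_is (P : seq nat -> Prop) (n : nat) : Prop :=
  exists s : seq (seq nat), uniq s /\ (forall G, G \in s <-> P G) /\ size s = n.

(* Main.v *)
Require Import Defs.
From mathcomp Require Import all_boot all_algebra zify.
Set Implicit Arguments. Unset Strict Implicit. Unset Printing Implicit Defensive.


Definition hT (T j : nat) : nat := if T <= j.*2 then 'C(j, j.*2 - T) else 0.

Lemma hT_rec T j : hT T.+2 j.+1 = hT T j + hT T.+1 j.
Proof.
rewrite /hT doubleS.
case: ifP => H0; case: ifP => H1; case: ifP => H2; try lia.
- have -> : j.*2.+2 - T.+2 = (j.*2 - T.+1).+1 by lia.
  rewrite binS; congr (_ + _); congr 'C(_,_); lia.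
- have E : j.*2 = T by lia.
  have -> : j.*2.+2 - T.+2 = 0 by lia.
  by rewrite E subnn !bin0 addn0.
Qed.

Lemma hT_big T j : T < j -> hT T j = 0.
Proof. move=> H; rewrite /hT; case: ifP => // _; apply: bin_small; lia. Qed.

Lemma fibsum T J : T < J -> \sum_(0 <= j < J) hT T j = fib T.+1.
Proof.
elim: T {-2}T (leqnn T) J => [|n IH] T HT J HJ.
  have -> : T = 0 by lia.
  case: J HJ => // J _; rewrite big_nat_recl // big1_seq ?addn0 //.
  move=> i /andP [_ Hi]; rewrite mem_index_iota in Hi; apply: hT_big; lia.
case: T HT HJ => [|[|T]] HT HJ.
- exact: IH.
- case: J HJ => // [[|J]] HJ //. rewrite big_nat_recl // big_nat_recl //.
  rewrite big1_seq ?addn0 //.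
    move=> i /andP [_ Hi]; rewrite mem_index_iota in Hi; apply: hT_big; lia.
- case: J HJ => // J HJ; rewrite big_nat_recl //.
  have -> : hT T.+2 0 = 0 by rewrite /hT.
  rewrite add0n.
  under eq_bigr do rewrite hT_rec.
  rewrite big_split /=.
  have E1 := IH T ltac:(lia) J ltac:(lia).
  have E2 := IH T.+1 ltac:(lia) J ltac:(lia).
  rewrite E1 E2 addnC; by [].
Qed.

Fixpoint chooseL (r : nat) (u : seq nat) : seq (seq nat) :=
  match r, u with
  | 0, _ => [:: [::]]
  | _.+1, [::] => [::]
  | r'.+1, x :: u' => map (cons x) (chooseL r' u') ++ chooseL r u'
  end.

Lemma size_choose r u : size (chooseL r u) = 'C(size u, r).
Proof.
elim: u r => [|x u IH] [|r] //=.
by rewrite size_cat size_map !IH binS addnC.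
Qed.

Lemma mem_choose r u w : uniq u ->
  (w \in chooseL r u) = (subseq w u && (size w == r)).
Proof.
elim: u r w => [|x u IH] r w.
  case: r => [|r] _ /=.
    rewrite mem_seq1; case: w => //.
  rewrite in_nil; case: w => //.
move=> /= /andP [xu uu].
case: r => [|r] /=.
  rewrite mem_seq1; case: w => [|y w] /=; first by [].
  by rewrite andbF.
rewrite mem_cat IH //.
case: w => [|y w] /=.
  rewrite andbF orbF; apply/negbTE/mapP => [[z _]] //.
have -> : (y :: w \in [seq x :: i | i <- chooseL r u]) = (y == x) && (w \in chooseL r u).
  apply/mapP/andP => [[z Hz [-> ->]] | [/eqP -> Hw]]; first by split.
  by exists w.
rewrite IH // eqSS.
case: eqP => [->|_] /=; last by [].
have -> : subseq (x :: w) u = false.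
  apply/negbTE/negP => /mem_subseq H; by move: (H x (mem_head _ _)); rewrite (negbTE xu).
by rewrite andFb orbF.
Qed.

Lemma choose_uniq r u : uniq u -> uniq (chooseL r u).
Proof.
elim: u r => [|x u IH] [|r] //= /andP [xu uu].
rewrite cat_uniq map_inj_uniq ?IH //; last by move=> a b [].
rewrite andbT; apply/hasP => [[w Hw /mapP [z _ Ez]]].
move: Hw; rewrite Ez mem_choose // => /andP [/mem_subseq H _].
by move: (H x (mem_head _ _)); rewrite (negbTE xu).
Qed.

Definition Dl A k := [seq x <- iota 0 k | in_sumset A x].
Definition Ul A k m := iota (m+k).+1 (m-k).-1 ++
   map (addn (2 * m)) [seq y <- iota 0 k | ~~ in_sumset A y].
Definition Lb A k m (W : seq nat) x :=
  [|| (m <= x <= m+k) && (x - m \in A),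
      (2 * m <= x < 2 * m+k) && in_sumset A (x - 2 * m) | x \in W].
Definition Ll A k m W := map (addn m) A ++ map (addn (2 * m)) (Dl A k) ++ W.
Definition Gof A k m W := [seq x <- iota 1 (2 * m+k) | x \notin Ll A k m W].

Lemma mem_map_addn c s x : (x \in map (addn c) s) = (c <= x) && (x - c \in s).
Proof.
apply/mapP/andP => [[y Hy ->] | [H1 H2]].
  by rewrite leq_addr addKn.
by exists (x - c) => //; rewrite subnKC.
Qed.

Lemma memLl A k m W x : (forall a, a \in A -> a <= k-1) -> 0 < k ->
  (x \in Ll A k m W) = Lb A k m W x.
Proof.
move=> HA Hk; rewrite /Ll /Lb !mem_cat !mem_map_addn mem_filter mem_iota add0n.
case: (x \in W); rewrite ?orbT //.
rewrite !orbF; congr orb.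
  case Hm: (m <= x) => //=; case Hx: (x - m \in A); rewrite ?andbF ?andbT //.
  have := HA _ Hx; lia.
case H: (2 * m <= x) => //=; rewrite andbC; congr andb; lia.
Qed.

Lemma memUl A k m x : 0 < k -> k < m -> (x \in Ul A k m) =
  (m+k < x < 2 * m) || ((2 * m <= x < 2 * m+k) && ~~ in_sumset A (x - 2 * m)).
Proof.
move=> Hk Hm; rewrite /Ul mem_cat mem_iota mem_map_addn mem_filter mem_iota add0n.
congr orb; first by apply/idP/idP; lia.
case H: (2 * m <= x) => //=; rewrite andbC; congr andb; lia.
Qed.

Lemma memGof A k m W x : (x \in Gof A k m W) = (0 < x <= 2 * m+k) && (x \notin Ll A k m W).
Proof. rewrite /Gof mem_filter mem_iota andbC; congr andb; lia. Qed.

Lemma count_sub (L I : seq nat) : uniq L -> uniq I -> {subset L <= I} ->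
  count (mem L) I = size L.
Proof.
move=> uL uI sub; rewrite -size_filter; apply/perm_size/uniq_perm.
- exact: filter_uniq.
- exact: uL.
- move=> x; rewrite mem_filter; apply/andP/idP => [[]//|H]; split => //; exact: sub.
Qed.

Lemma size_Gof A k m W : uniq (Ll A k m W) ->
  {subset Ll A k m W <= iota 1 (2 * m+k)} ->
  size (Gof A k m W) + size (Ll A k m W) = 2 * m+k.
Proof.
move=> uL sub; rewrite /Gof size_filter -(count_sub uL (iota_uniq _ _) sub).
by rewrite addnC (count_predC (mem (Ll A k m W))) size_iota.
Qed.

Lemma sumset_intro A a1 a2 : a1 \in A -> a2 \in A -> in_sumset A (a1 + a2).
Proof. move=> H1 H2; apply/hasP; exists a1 => //; apply/hasP; by exists a2. Qed.

Lemma sumset_elim A x : in_sumset A x -> exists a1 a2, [/\ a1 \in A, a2 \in A & x = a1 + a2].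
Proof. move=> /hasP [a1 H1 /hasP [a2 H2 /eqP E]]; by exists a1, a2. Qed.

Lemma Ale0 k A : in_calA k A -> 0 < k -> forall a, a \in A -> a < k.
Proof. move=> [_ [H _]] Hk a Ha; have := H a Ha; lia. Qed.

Lemma calA_k k A : in_calA k A -> 0 < k.
Proof.
move=> [_ [_ [H0 Hk]]]; case: k Hk => // Hk; case/negP: Hk.
by apply/hasP; exists 0 => //; apply/hasP; exists 0.
Qed.

Lemma Ale k A : in_calA k A -> forall a, a \in A -> a < k.
Proof. move=> HA; exact: (Ale0 HA (calA_k HA)). Qed.

Lemma Lb_W A k m (W : seq nat) x : 0 < k -> k < m -> {subset W <= Ul A k m} -> x \in W ->
  m + k < x < 2 * m + k.
Proof.
move=> Hk Hm sub /sub; rewrite memUl //; lia.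
Qed.

Lemma Lb_ge A k m (W : seq nat) x : in_calA k A -> 0 < k -> k < m -> {subset W <= Ul A k m} ->
  Lb A k m W x -> m <= x < 2 * m + k.
Proof.
move=> HA Hk Hm sub; rewrite /Lb; case/or3P.
- move=> /andP [H1 H2]; have := Ale HA H2; lia.
- lia.
- move=> /(Lb_W Hk Hm sub); lia.
Qed.

Lemma Lb_low A k m (W : seq nat) x : in_calA k A -> 0 < k -> k < m -> {subset W <= Ul A k m} ->
  x <= m + k -> Lb A k m W x = (m <= x) && (x - m \in A).
Proof.
move=> HA Hk Hm sub Hx; rewrite /Lb.
case Hw: (x \in W); first by have := Lb_W Hk Hm sub Hw; lia.
rewrite orbF; have -> : (2 * m <= x < 2 * m + k) = false by lia.
by rewrite orbF Hx andbT.
Qed.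

Lemma Ll_uniq A k m (W : seq nat) : in_calA k A -> 0 < k -> k < m -> {subset W <= Ul A k m} ->
  uniq W -> uniq (Ll A k m W).
Proof.
move=> HA Hk Hm sub uW; have HAl := Ale HA.
have uA : uniq A by case: HA => [s _]; apply: (sorted_uniq ltn_trans ltnn).
rewrite /Ll !cat_uniq uW !map_inj_uniq ?uA ?filter_uniq ?iota_uniq; try exact: addnI.
rewrite /= andbT; apply/andP; split.
  apply/hasP => [[x]]; rewrite mem_cat !mem_map_addn => Hx /andP [H1 H2].
  have := HAl _ H2; case/orP: Hx => [/andP [H3 _]|/(Lb_W Hk Hm sub)]; lia.
apply/hasP => [[x Hx]]; rewrite mem_map_addn /Dl mem_filter => /andP [H1 /andP [Hs _]].
have := sub x Hx; rewrite memUl // Hs /=; lia.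
by [].
Qed.

Lemma Ll_sub A k m (W : seq nat) : in_calA k A -> 0 < k -> k < m -> {subset W <= Ul A k m} ->
  {subset Ll A k m W <= iota 1 (2 * m+k)}.
Proof.
move=> HA Hk Hm sub x; rewrite memLl //; last by move=> a /(Ale HA); lia.
move=> /(Lb_ge HA Hk Hm sub); rewrite mem_iota; lia.
Qed.

Lemma size_Dl A k : in_calA k A -> size (Dl A k) = sumset_card_upto A k.
Proof.
move=> [_ [_ [_ Hk]]]; rewrite /Dl size_filter /sumset_card_upto -addn1 iotaD count_cat.
by rewrite /= (negbTE Hk) !addn0.
Qed.

Lemma size_Ul A k m : in_calA k A -> k < m ->
  size (Ul A k m) = m - 1 - sumset_card_upto A k.
Proof.
move=> HA Hm; rewrite /Ul size_cat size_iota size_map size_filter -size_Dl //.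
rewrite /Dl size_filter.
have E := count_predC (in_sumset A) (iota 0 k); rewrite size_iota in E.
have L : count (in_sumset A) (iota 0 k) <= k by rewrite -[X in _ <= X](size_iota 0 k) count_size.
have -> : count (fun y : nat => ~~ in_sumset A y) (iota 0 k) = count (predC (in_sumset A)) (iota 0 k) by [].
move: E L; set c := count _ _; set d := count _ _.

lia.
Qed.

Lemma size_Ll A k m (W : seq nat) : in_calA k A ->
  size (Ll A k m W) = size A + sumset_card_upto A k + size W.
Proof. move=> HA; by rewrite /Ll !size_cat !size_map size_Dl // addnA. Qed.

Lemma Gof_mem A k m (W : seq nat) x : in_calA k A ->
  (x \in Gof A k m W) = (0 < x <= 2 * m + k) && ~~ Lb A k m W x.
Proof.
move=> HA; rewrite memGof memLl //; last exact: calA_k HA.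
by move=> a /(Ale HA); lia.
Qed.

Lemma notGof A k m (W : seq nat) x : in_calA k A ->
  (x \notin Gof A k m W) = [|| x == 0, 2 * m + k < x | Lb A k m W x].
Proof.
move=> HA; rewrite Gof_mem // negb_and negbK orbA; congr orb.
by case: x => [|x] //=; rewrite -leqNgt.
Qed.

Lemma Gof_gapset A k m (W : seq nat) : in_calA k A -> k < m -> {subset W <= Ul A k m} ->
  is_gapset (Gof A k m W).
Proof.
move=> HA Hm sub; have Hk := calA_k HA.
split; first by apply: sorted_filter; [exact: ltn_trans | exact: iota_ltn_sorted].
split; first by rewrite Gof_mem.
move=> a b; rewrite !notGof // => Ha Hb.
case: (posnP a) => [E | Ha0]; first by rewrite E add0n.
case: (posnP b) => [E | Hb0]; first by rewrite E addn0.
have -> : (a + b == 0) = false by lia.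
case: (ltnP (2 * m + k) (a + b)) => Hab; first by [].
have La : Lb A k m W a.
  move: Ha; have -> : (a == 0) = false by lia.
  by case/orP => // H; lia.
have Lb' : Lb A k m W b.
  move: Hb; have -> : (b == 0) = false by lia.
  by case/orP => // H; lia.
have := Lb_ge HA Hk Hm sub La; have := Lb_ge HA Hk Hm sub Lb' => Hb1 Ha1.
rewrite Lb_low // in La; last lia.
rewrite Lb_low // in Lb'; last lia.
move: La Lb' => /andP [_ HaA] /andP [_ HbA].
have S := sumset_intro HaA HbA.
have E : a - m + (b - m) = a + b - 2 * m by lia.
rewrite E in S.
apply/orP; right; apply/orP; right; rewrite /Lb S andbT; apply/orP; right; apply/orP; left.
case: HA => [_ [_ [_ Hnk]]].
have Hne : a + b - 2 * m != k by apply: contraNneq Hnk => <-.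
apply/andP; split; lia.
Qed.

Lemma Gof_type A k m (W : seq nat) : in_calA k A -> k < m -> {subset W <= Ul A k m} ->
  has_type (Gof A k m W) A k.
Proof.
move=> HA Hm sub; have Hk := calA_k HA.
exists m, (2 * m + k); split; [|split; [|split; [lia|split; [done|split; [done|split; [done|split; [done|]]]]]]].
- split; first lia.
  split.
    rewrite /semigroup_of notGof // Lb_low //; try lia.
    by rewrite leqnn subnn; case: HA => [_ [_ [-> _]]]; rewrite !orbT.
  move=> x Hx; rewrite /semigroup_of negbK Gof_mem //.
  apply/andP; split; first lia.
  by apply/negP => /(Lb_ge HA Hk Hm sub); lia.
- split.
    rewrite /semigroup_of negbK Gof_mem //.
    apply/andP; split; first lia.
    by apply/negP => /(Lb_ge HA Hk Hm sub); lia.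
  move=> x; rewrite /semigroup_of negbK Gof_mem // => /andP [H _]; lia.
- move=> x Hx; rewrite /semigroup_of notGof //.
  rewrite Lb_low //; last lia.
  have -> : (x == 0) = false by lia.
  have -> : (2 * m + k < x) = false by lia.
  by rewrite /= (_ : m <= x = true) //; lia.
Qed.

Lemma Gof_genus A k m (W : seq nat) : in_calA k A -> k < m -> {subset W <= Ul A k m} ->
  uniq W ->
  size (Gof A k m W) + (size A + sumset_card_upto A k + size W) = 2 * m + k.
Proof.
move=> HA Hm sub uW; have Hk := calA_k HA.
rewrite -(size_Ll m W HA); apply: size_Gof.
  exact: Ll_uniq.
exact: Ll_sub.
Qed.

Lemma decomp A k G m : in_calA k A -> k < m -> is_gapset G ->
  is_multiplicity G m -> is_frobenius G (2 * m + k) ->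
  (forall x, m <= x <= m + k -> semigroup_of G x = (x - m \in A)) ->
  G = Gof A k m [seq x <- Ul A k m | x \notin G].
Proof.
move=> HA Hm [sG [G0 Gcl]] [m0 [mS mlow]] [fG fmax] Hty.
have Hk := calA_k HA.
set W := [seq x <- Ul A k m | x \notin G].
have sub : {subset W <= Ul A k m} by move=> x; rewrite mem_filter => /andP [].
have memW x : (x \in W) = (x \in Ul A k m) && (x \notin G) by rewrite mem_filter andbC.
apply: (irr_sorted_eq ltn_trans ltnn sG).
  by apply: sorted_filter; [exact: ltn_trans | exact: iota_ltn_sorted].
move=> x; rewrite Gof_mem //.
rewrite /semigroup_of in mS mlow fG fmax Hty.
case: (posnP x) => [->|Hx0]; first by rewrite (negbTE G0).
case: (ltnP (2 * m + k) x) => Hxf.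
  rewrite andbF; apply/negP => H; have := fmax x; rewrite negbK => /(_ H); lia.
case: (ltnP x m) => Hxm.
  have -> : x \in G by have := mlow x; rewrite negbK; apply; lia.
  have -> : Lb A k m W x = false by apply/negP => /(Lb_ge HA Hk Hm sub); lia.
  lia.
case: (leqP x (m + k)) => Hxk.
  rewrite Lb_low // Hxm /= -Hty; last lia.
  by rewrite negbK.
rewrite /Lb memW.
have -> : (m <= x <= m + k) = false by lia.
have L : (0 < x <= 2 * m + k) = true by lia.
rewrite /=.
case: (ltnP x (2 * m)) => Hx2.
  rewrite /= memUl //.
  have -> : (m + k < x < 2 * m) = true by lia.
  by rewrite /= negbK.
case: (ltnP x (2 * m + k)) => Hx3; last first.
  have Ex : x = 2 * m + k by lia.
  rewrite Ex memUl //.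
  have -> : (m + k < 2 * m + k < 2 * m) = false by lia.
  have -> : (2 * m <= 2 * m + k < 2 * m + k) = false by lia.
  by rewrite /= -(negbK (_ \in G)) fG.
rewrite /= memUl //.
have -> : (m + k < x < 2 * m) = false by lia.
have -> : (2 * m <= x < 2 * m + k) = true by lia.
rewrite /=.
case Hs: (in_sumset A (x - 2 * m)) => /=.
  have [a1 [a2 [H1 H2 E]]] := sumset_elim Hs.
  have := Ale HA H1; have := Ale HA H2 => L2 L1.
  have N1 : m + a1 \notin G by rewrite Hty ?addKn //; lia.
  have N2 : m + a2 \notin G by rewrite Hty ?addKn //; lia.
  have := Gcl _ _ N1 N2.
  have -> : m + a1 + (m + a2) = x by lia.
  by move/negbTE => ->.
by rewrite negbK.
Qed.

Lemma Ul_uniq A k m : k < m -> uniq (Ul A k m).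
Proof.
move=> Hm; rewrite /Ul cat_uniq iota_uniq map_inj_uniq ?filter_uniq ?iota_uniq; last exact: addnI.
rewrite andbT /=; apply/hasP => [[x]]; rewrite mem_map_addn mem_iota => /andP [H1 _] H2; lia.
by [].
Qed.

Lemma mult_uniq G m m' : is_multiplicity G m -> is_multiplicity G m' -> m = m'.
Proof.
move=> [h0 [h1 h2]] [h0' [h1' h2']].
case: (ltngtP m m') => // H.
  by have := h2' m; rewrite h1 => /(_ _) /negP; case; lia.
by have := h2 m'; rewrite h1' => /(_ _) /negP; case; lia.
Qed.

Lemma Gof_mult A k m (W : seq nat) : in_calA k A -> k < m -> {subset W <= Ul A k m} ->
  is_multiplicity (Gof A k m W) m.
Proof.
move=> HA Hm sub.
have Hk := calA_k HA.
have Mm : is_multiplicity (Gof A k m W) m.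
  split; first lia.
  split.
    rewrite /semigroup_of notGof //.
    rewrite Lb_low //; last lia.
    by rewrite leqnn subnn; case: HA => [_ [_ [-> _]]]; rewrite !orbT.
  move=> x Hx; rewrite /semigroup_of negbK Gof_mem //.
  apply/andP; split; first lia.
  by apply/negP => /(Lb_ge HA Hk Hm sub); lia.
exact: Mm.
Qed.

Lemma W_recover A k m (W : seq nat) : in_calA k A -> k < m -> subseq W (Ul A k m) ->
  W = [seq x <- Ul A k m | x \notin Gof A k m W].
Proof.
move=> HA Hm Hs; have Hk := calA_k HA.
have U := Ul_uniq A Hm; rewrite {1}(@subseq_uniqP _ W _ U Hs); apply: eq_in_filter => x Hx.
rewrite notGof // /Lb.
have R := Hx; rewrite memUl // in R.
have -> : (x == 0) = false by lia.
have -> : (2 * m + k < x) = false by lia.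
have -> : (m <= x <= m + k) = false by lia.
case/orP: R => R.
  have -> : (2 * m <= x < 2 * m + k) = false by lia.
  by [].
case/andP: R => R1 /negbTE R2; by rewrite R1 R2.
Qed.

Lemma uniq_flatten_map (T U : eqType) (F : T -> seq U) (ms : seq T) :
  uniq ms -> (forall m, m \in ms -> uniq (F m)) ->
  (forall m m' x, m \in ms -> m' \in ms -> x \in F m -> x \in F m' -> m = m') ->
  uniq (flatten (map F ms)).
Proof.
elim: ms => [|m ms IH] //= /andP [mn un] HF Hd.
rewrite cat_uniq HF ?mem_head // IH //; last 2 first.
- by move=> y Hy; apply: HF; rewrite inE Hy orbT.
- by move=> y y' x Hy Hy'; apply: Hd; rewrite inE ?Hy ?Hy' orbT.
rewrite andbT; apply/hasP => [[x /flatten_mapP [m' Hm' Hx] Hx']].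
have Hm'' : m' \in m :: ms by rewrite inE Hm' orbT.
have E := Hd m m' x (mem_head _ _) Hm'' Hx' Hx.
by rewrite E Hm' in mn.
Qed.

Definition Fm A k g m :=
  if size A + sumset_card_upto A k + g <= 2 * m + k then
    map (Gof A k m) (chooseL (2 * m + k - (size A + sumset_card_upto A k + g)) (Ul A k m))
  else [::].
Definition SS A k g := flatten (map (Fm A k g) (iota k.+1 (g + size A))).

Lemma SS_spec A k g G : in_calA k A ->
  G \in SS A k g <-> (is_gapset G /\ genus G = g /\ has_type G A k).
Proof.
move=> HA; have Hk := calA_k HA; split.
  move=> /flatten_mapP [m]; rewrite mem_iota => Hm.
  rewrite /Fm; case: ifP => // Hg /mapP [W]; rewrite mem_choose ?Ul_uniq //; last lia.
  move=> /andP [Hs /eqP Hsz] ->.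
  have sub : {subset W <= Ul A k m} by apply: mem_subseq.
  have uW : uniq W by apply: subseq_uniq Hs (Ul_uniq _ _); lia.
  split; first by apply: Gof_gapset => //; lia.
  split; last by apply: Gof_type => //; lia.
  have Hkm : k < m by lia.
  have L : forall a b c g m k : nat, a + (b + c + size W) = 2 * m + k -> size W = 2 * m + k - (b + c + g) -> b + c + g <= 2 * m + k -> a = g by move=> *; lia.
  have := Gof_genus HA Hkm sub uW; rewrite /genus => H; exact: L H Hsz Hg.
move=> [Hgap [Hgen [m [f [Hmult [Hfrob [Hf3 [_ [Hkm [_ [Ef Hty]]]]]]]]]]].
rewrite Ef in Hfrob.
have E := decomp HA Hkm Hgap Hmult Hfrob Hty.
set W := [seq x <- Ul A k m | x \notin G] in E.
have sub : {subset W <= Ul A k m} by move=> x; rewrite mem_filter => /andP [].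
have uW : uniq W by apply: filter_uniq; apply: Ul_uniq.
have Hsz := Gof_genus HA Hkm sub uW; rewrite -E in Hsz.
have HW : size W <= size (Ul A k m) by apply: size_subseq; apply: filter_subseq.
rewrite size_Ul // in HW.
rewrite /genus in Hgen.
have Hs1 : sumset_card_upto A k <= k.+1.
  by rewrite /sumset_card_upto -[X in _ <= X](size_iota 0 k.+1) count_size.
rewrite Hgen in Hsz.
move: Hsz HW Hs1; set w := size W; set s := sumset_card_upto A k => Hsz HW Hs1.
apply/flatten_mapP; exists m.
  rewrite mem_iota; lia.
rewrite /Fm; have -> : size A + sumset_card_upto A k + g <= 2 * m + k by lia.
rewrite E; apply: map_f; rewrite mem_choose ?Ul_uniq // filter_subseq /=.
apply/eqP; rewrite -/s; change (w = 2 * m + k - (size A + s + g)); lia.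
Qed.

Lemma SS_uniq A k g : in_calA k A -> uniq (SS A k g).
Proof.
move=> HA; have Hk := calA_k HA.
apply: uniq_flatten_map; first exact: iota_uniq.
  move=> m; rewrite mem_iota => Hm0.
  have Hm : k < m by case/andP: Hm0.
  rewrite /Fm; case: ifP => // _.
  have U := Ul_uniq A Hm.
  rewrite map_inj_in_uniq; first exact: choose_uniq.
  move=> W W'; rewrite !mem_choose //.
  move=> /andP [H1 _] /andP [H2 _] E.
  by rewrite (W_recover HA Hm H1) (W_recover HA Hm H2) E.
move=> m m' x; rewrite !mem_iota => Hm0 Hm0'; rewrite /Fm.
have Hm : k < m by case/andP: Hm0.
have Hm' : k < m' by case/andP: Hm0'.
have U := Ul_uniq A Hm; have U' := Ul_uniq A Hm'.
case: ifP => // _ /mapP [W HW ->]; case: ifP => // _ /mapP [W' HW' E].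
move: HW HW'; rewrite !mem_choose //.
move=> /andP [/mem_subseq H1 _] /andP [/mem_subseq H2 _].
apply: (@mult_uniq (Gof A k m W)); first exact: Gof_mult.
by rewrite E; apply: Gof_mult.
Qed.

Lemma size_SS A k g : in_calA k A ->
  size (SS A k g) = \sum_(m <- iota k.+1 (g + size A))
     (if size A + sumset_card_upto A k + g <= 2 * m + k then
       'C(m - 1 - sumset_card_upto A k, 2 * m + k - (size A + sumset_card_upto A k + g)) else 0).
Proof.
move=> HA; rewrite /SS size_flatten /shape -map_comp sumnE big_map.
apply: eq_big_seq => m; rewrite mem_iota => Hm /=.
rewrite /Fm; case: ifP => // _.
by rewrite size_map size_choose size_Ul //; lia.
Qed.

Unset Implicit Arguments.
Theorem proposition3p5 (g k : nat) (A : seq nat) :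
  0 < g -> 0 < k -> in_calA k A ->
  let idx : int := (g%:Z - (sumset_card_upto A k)%:Z + (size A)%:Z - k%:Z - 1)%R in
  exists n : nat,
    card_is (fun G => is_gapset G /\ genus G = g /\ has_type G A k) n /\
    n <= fibz idx /\
    (3 * k + 2 <= g + size A + sumset_card_upto A k -> n = fibz idx) /\
    (3 * k <= g -> n = fibz idx).
Proof.
intros Hg Hk HA idx; subst idx.
exists (size (SS A k g)).
have Hsk : sumset_card_upto A k <= k.
  rewrite -size_Dl // /Dl size_filter -[X in _ <= X](size_iota 0 k); exact: count_size.
have Hs1 : 0 < sumset_card_upto A k.
  rewrite /sumset_card_upto /=; case: HA => [_ [_ [H0 _]]].
  suff -> : in_sumset A 0 by [].
  by apply/hasP; exists 0 => //; apply/hasP; exists 0.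
have Ha1 : 0 < size A by case: HA => [_ [_ [H0 _]]]; case: (A) H0.
split.
  exists (SS A k g); split; first exact: SS_uniq.
  split => //; move=> G; exact: SS_spec.
rewrite size_SS //.
move: Hsk Hs1 Ha1; set s := sumset_card_upto A k; set a := size A.
move=> Hsk Hs1 Ha1.
case: (leqP (s + k + 2) (a + g)) => Hc.
- set T := a + g - (s + k + 2).
  have -> : (g%:Z - s%:Z + a%:Z - k%:Z - 1)%R = Posz T.+1 by rewrite /T; lia.
  change (fibz (Posz T.+1)) with (fib T.+1).
  have -> : iota k.+1 (g + a) = map (addn k.+1) (iota 0 (g + a)) by rewrite -iotaDl addn0.
  rewrite big_map.
  rewrite (eq_bigr (fun i => hT T (k - s + i))); last first.
    move=> i _; rewrite /hT.
    have -> : (T <= (k - s + i).*2) = (a + s + g <= 2 * (k.+1 + i) + k) by rewrite /T; lia.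
    case: ifP => // _; congr 'C(_, _); rewrite /T; lia.
  have HT : T < k - s + (g + a) by rewrite /T; lia.
  have F := fibsum HT; rewrite /index_iota subn0 iotaD big_cat add0n in F.
  have EI : iota (k - s) (g + a) = map (addn (k - s)) (iota 0 (g + a)) by rewrite -iotaDl addn0.
  rewrite EI big_map in F.
  have -> : \sum_(i <- iota 0 (g + a)) hT T (k - s + i) = fib T.+1 - \sum_(i <- iota 0 (k - s)) hT T i.
    by rewrite -F addKn.
  split; first exact: leq_subr.
  have Z : 3 * k + 2 <= g + a + s -> \sum_(i <- iota 0 (k - s)) hT T i = 0.
    move=> H; apply: big1_seq => i /andP [_]; rewrite mem_iota => Hi.
    rewrite /hT; case: ifP => // H'; lia.
  split; first by move=> H; rewrite Z // subn0.
  by move=> H; rewrite Z ?subn0 //; lia.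
- have Z : \sum_(i <- iota k.+1 (g + a)) (if a + s + g <= 2 * i + k
      then 'C(i - 1 - s, 2 * i + k - (a + s + g)) else 0) = 0.
    apply: big1_seq => i /andP [_]; rewrite mem_iota => Hi.
    case: ifP => // H; apply: bin_small; lia.
  rewrite Z.
  have -> : fibz (g%:Z - s%:Z + a%:Z - k%:Z - 1)%R = 0.
    case E: (g%:Z - s%:Z + a%:Z - k%:Z - 1)%R => [[|n]|n] //; lia.
  by [].
Qed.
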